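(* In the $1/4$-rebate Marshallian Match, for every feasible bidder–asker pair $(i,j)$ and every strategy profile $(b,a)$, in every realization, $$u_i(b_{-i},a_{-j},b_i',a_j')+u_j(b_{-i},a_{-j},b_i',a_j')\;\ge\;\frac{s_{ij}}{4},$$ where $b_i'$ is the truthful strategy of $i$ ($b'_{i\ell}(t)=v_{i\ell}$ for all feasible askers $\ell$ and all $t$) and $a_j'$ is the truthful strategy of $j$ ($a'_{j\ell}(t)=c_{j\ell}$ for all feasible bidders $\ell$ and all $t$).
   Context: Bipartite setting: bidders and askers; bidder $i$ has value $v_{i\ell}\in\mathbb R$ for matching asker $\ell$ and asker $j$ has cost $c_{j\ell}\in\mathbb R$ for matching bidder $\ell$; surplus $s_{ij}=v_{ij}-c_{ji}$. $1/4$-rebate Marshallian Match: a global price $p(t)$ decreases continuously with $p(0)=+\infty$, $p(1)=0$. Each unmatched bidder $i$ maintains a bid $b_{i\ell}(t)\in\mathbb R$ on each feasible asker $\ell$, and each unmatched asker $j$ an ask $a_{j\ell}(t)\in\mathbb R$ on each feasible bidder $\ell$. No agent sees others' bids/asks; the only information received is being matched. As soon as an unmatched bidder $i$ and asker $j$ satisfy $b_{ij}(t)-a_{ji}(t)\ge p(t)$, they are matched and leave; the bidder pays $b_{ij}$, the asker receives $a_{ji}$, and each receives a rebate $(b_{ij}-a_{ji})/4$. Thus the bidder's utility is $v_{ij}-b_{ij}+(b_{ij}-a_{ji})/4$ and the asker's is $a_{ji}-c_{ji}+(b_{ij}-a_{ji})/4$; unmatched agents get $0$. $(b_{-i},a_{-j},b_i',a_j')$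 denotes the profile where $i$ and $j$ switch to $b_i'$, $a_j'$ and all others keep their strategies. *)

(* Defs.v *)
From Stdlib Require Import Reals Lra ClassicalDescription.
Open Scope R_scope.

(* Time runs over (0,1]; the global price p : R -> R is only meaningful there. *)
(* Price path: continuous and (weakly) decreasing on (0,1], p(1) = 0, and
   p(t) -> +oo as t -> 0+ (this encodes p(0) = +oo). *)
Record price_path (p : R -> R) : Prop := {
  pp_cont : forall t, 0 < t <= 1 -> forall eps, 0 < eps ->
      exists delta, 0 < delta /\
        forall s, 0 < s <= 1 -> Rabs (s - t) < delta -> Rabs (p s - p t) < eps;
  pp_decr : forall s t, 0 < s -> s <= t -> t <= 1 -> p t <= p s;
  pp_one : p 1 = 0;
  pp_zero : forall M, exists d, 0 < d /\ forall t, 0 < t < d -> M < p t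
}.

(* Strategies: bidder i bids b i l t on asker l at time t;
   asker j asks a j l t on bidder l at time t. *)
Definition bid_profile (B A : Type) := B -> A -> R -> R.
Definition ask_profile (B A : Type) := A -> B -> R -> R.

Definition upd {X Y : Type} (f : X -> Y) (x : X) (y : Y) : X -> Y :=
  fun z => if excluded_middle_informative (z = x) then y else f z.

Definition truthful_bid {B A : Type} (v : B -> A -> R) (i : B) : A -> R -> R :=
  fun l _ => v i l.
Definition truthful_ask {B A : Type} (c : A -> B -> R) (j : A) : B -> R -> R :=
  fun l _ => c j l.

(* An outcome (realization) of the mechanism: for each bidder, either unmatched
   (None) or matched to an asker at a time; likewise for askers. *)
Record outcome (B A : Type) := {
  mateB : B -> option (A * R);
  mateA : A -> option (B * R)
}.
Arguments mateB {B A}.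
Arguments mateA {B A}.

Definition presentB {B A} (o : outcome B A) (k : B) (t : R) : Prop :=
  forall l tau, mateB o k = Some (l, tau) -> t <= tau.
Definition presentA {B A} (o : outcome B A) (l : A) (t : R) : Prop :=
  forall k tau, mateA o l = Some (k, tau) -> t <= tau.

Record valid_run {B A : Type} (F : B -> A -> Prop) (p : R -> R)
    (b : bid_profile B A) (a : ask_profile B A) (o : outcome B A) : Prop := {
  vr_sym : forall k l tau, mateB o k = Some (l, tau) <-> mateA o l = Some (k, tau);
  vr_match : forall k l tau, mateB o k = Some (l, tau) ->
      F k l /\ 0 < tau <= 1 /\ b k l tau - a l k tau >= p tau;
  (* "as soon as": whenever a feasible present pair meets the price at
     time t, at least one of them is matched by time t *)
  vr_prompt : forall k l t, F k l -> 0 < t <= 1 ->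
      presentB o k t -> presentA o l t -> b k l t - a l k t >= p t ->
      (exists l' tau, mateB o k = Some (l', tau) /\ tau <= t) \/
      (exists k' tau, mateA o l = Some (k', tau) /\ tau <= t)
}.

Definition util_bidder {B A} (v : B -> A -> R) (b : bid_profile B A)
    (a : ask_profile B A) (o : outcome B A) (k : B) : R :=
  match mateB o k with
  | Some (l, tau) => v k l - b k l tau + (b k l tau - a l k tau) / 4
  | None => 0
  end.
Definition util_asker {B A} (c : A -> B -> R) (b : bid_profile B A)
    (a : ask_profile B A) (o : outcome B A) (l : A) : R :=
  match mateA o l with
  | Some (k, tau) => a l k tau - c l k + (b k l tau - a l k tau) / 4
  | None => 0
  end.

(* Main.v *)
Require Import Defs.
From Stdlib Require Import Reals Lra ClassicalDescription.
Open Scope R_scope.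

Lemma cont_below (p : R -> R) (hp : price_path p) (T s : R) :
  0 < T <= 1 -> p T < s -> exists t, 0 < t < T /\ p t < s.
Proof.
  intros HT Hs.
  assert (He : 0 < s - p T) by lra.
  destruct (pp_cont p hp T HT (s - p T) He) as [d [Hd Hc]].
  set (t := Rmax (T/2) (T - d/2)).
  assert (H1 : T/2 <= t) by apply Rmax_l.
  assert (H2 : T - d/2 <= t) by apply Rmax_r.
  assert (H3 : t < T).
  { unfold t; apply Rmax_lub_lt; lra. }
  exists t; split; [lra|].
  assert (Habs : Rabs (t - T) < d).
  { rewrite Rabs_left by lra. lra. }
  specialize (Hc t ltac:(lra) Habs).
  apply Rabs_def2 in Hc. lra.
Qed.

Theorem mainTheorem12 (B A : Type) (F : B -> A -> Prop)
    (v : B -> A -> R) (c : A -> B -> R) (p : R -> R)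
    (hp : price_path p)
    (b : bid_profile B A) (a : ask_profile B A) (i : B) (j : A)
    (hij : F i j) :
  let b' := upd b i (truthful_bid v i) in
  let a' := upd a j (truthful_ask c j) in
  forall o : outcome B A, valid_run F p b' a' o ->
    util_bidder v b' a' o i + util_asker c b' a' o j >= (v i j - c j i) / 4.
Proof.
  intros b' a' o H.
  assert (Hb' : forall l t, b' i l t = v i l).
  { intros l t; unfold b', upd, truthful_bid.
    destruct (excluded_middle_informative (i = i)); [reflexivity|congruence]. }
  assert (Ha' : forall k t, a' j k t = c j k).
  { intros k t; unfold a', upd, truthful_ask.
    destruct (excluded_middle_informative (j = j)); [reflexivity|congruence]. }
  assert (Hp0 : forall t, 0 < t <= 1 -> 0 <= p t).
  { intros t Ht. rewrite <- (pp_one p hp). apply (pp_decr p hp); lra. }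
  assert (Ui : forall l tau, mateB o i = Some (l, tau) ->
             util_bidder v b' a' o i >= p tau / 4).
  { intros l tau E. unfold util_bidder. rewrite E, Hb'.
    destruct (vr_match F p b' a' o H i l tau E) as [_ [_ Hm]].
    rewrite Hb' in Hm. lra. }
  assert (Uj : forall k tau, mateA o j = Some (k, tau) ->
             util_asker c b' a' o j >= p tau / 4).
  { intros k tau E. unfold util_asker. rewrite E, Ha'.
    apply (vr_sym F p b' a' o H) in E.
    destruct (vr_match F p b' a' o H k j tau E) as [_ [Ht Hm]].
    rewrite Ha' in Hm. lra. }
  assert (Ui0 : util_bidder v b' a' o i >= 0).
  { destruct (mateB o i) as [[l tau]|] eqn:E.
    - pose proof (Ui l tau ltac:(first [exact E | reflexivity])).
      destruct (vr_match F p b' a' o H i l tau E) as [_ [Ht _]].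
      pose proof (Hp0 tau Ht). lra.
    - unfold util_bidder; rewrite E; lra. }
  assert (Uj0 : util_asker c b' a' o j >= 0).
  { destruct (mateA o j) as [[k tau]|] eqn:E.
    - pose proof (Uj k tau ltac:(first [exact E | reflexivity])).
      apply (vr_sym F p b' a' o H) in E.
      destruct (vr_match F p b' a' o H k j tau E) as [_ [Ht _]].
      pose proof (Hp0 tau Ht). lra.
    - unfold util_asker; rewrite E; lra. }
  set (s := v i j - c j i).
  destruct (Rle_lt_dec s 0) as [Hs|Hs]; [lra|].
  set (Ti := match mateB o i with Some (_, tau) => tau | None => 2 end).
  set (Tj := match mateA o j with Some (_, tau) => tau | None => 2 end).
  assert (Key : forall t, 0 < t <= 1 -> p t <= s -> Ti <= t \/ Tj <= t).
  { intros t Ht Hpt.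
    destruct (Rle_lt_dec Ti t) as [h|hi]; [left; exact h|].
    destruct (Rle_lt_dec Tj t) as [h|hj]; [right; exact h|].
    assert (PB : presentB o i t).
    { intros l tau E. unfold Ti in hi; rewrite E in hi; lra. }
    assert (PA : presentA o j t).
    { intros k tau E. unfold Tj in hj; rewrite E in hj; lra. }
    assert (Hsp : b' i j t - a' j i t >= p t).
    { rewrite Hb', Ha'. fold s. lra. }
    destruct (vr_prompt F p b' a' o H i j t hij Ht PB PA Hsp)
      as [[l' [tau [E Hle]]]|[k' [tau [E Hle]]]].
    - left. unfold Ti; rewrite E; exact Hle.
    - right. unfold Tj; rewrite E; exact Hle. }
  assert (K1 : Ti <= 1 \/ Tj <= 1).
  { apply Key; [lra|]. rewrite (pp_one p hp). lra. }
  destruct (Rle_lt_dec Ti Tj) as [Hij|Hji].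
  - assert (Ti1 : Ti <= 1) by (destruct K1; lra).
    destruct (mateB o i) as [[l tau]|] eqn:E.
    2:{ unfold Ti in Ti1; try rewrite E in Ti1; simpl in Ti1; lra. }
    assert (HT : Ti = tau) by (unfold Ti; try rewrite E; reflexivity).
    destruct (vr_match F p b' a' o H i l tau E) as [_ [Ht _]].
    assert (Hge : p tau >= s).
    { destruct (Rlt_le_dec (p tau) s) as [Hlt|]; [|lra].
      destruct (cont_below p hp tau s Ht Hlt) as [t [Ht' Hpt]].
      destruct (Key t ltac:(lra) ltac:(lra)); lra. }
    pose proof (Ui l tau ltac:(first [exact E | reflexivity])). lra.
  - assert (Tj1 : Tj <= 1) by (destruct K1; lra).
    destruct (mateA o j) as [[k tau]|] eqn:E.
    2:{ unfold Tj in Tj1; try rewrite E in Tj1; simpl in Tj1; lra. }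
    assert (HT : Tj = tau) by (unfold Tj; try rewrite E; reflexivity).
    pose proof (Uj k tau ltac:(first [exact E | reflexivity])) as Ujk.
    apply (vr_sym F p b' a' o H) in E.
    destruct (vr_match F p b' a' o H k j tau E) as [_ [Ht _]].
    assert (Hge : p tau >= s).
    { destruct (Rlt_le_dec (p tau) s) as [Hlt|]; [|lra].
      destruct (cont_below p hp tau s Ht Hlt) as [t [Ht' Hpt]].
      destruct (Key t ltac:(lra) ltac:(lra)); lra. }
    lra.
Qed.
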